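(* For every $d\ge1$, $$\mathrm{dS}^{d,\rm cut}_{\mathbb C}=\{z\in\mathrm{dS}^d_{\mathbb C}\;:\;-iz_0\notin(-\infty,-1]\}.$$
   Context: Let $d\ge1$. On $\mathbb C^{1+d}$, with points $z=(z_0,z_1,\dots,z_d)$ and standard basis $e_0,\dots,e_d$, let $\beta(z,w)=z_0w_0-z_1w_1-\dots-z_dw_d$. Let $V=\mathbb R^{1+d}\subset\mathbb C^{1+d}$ and $V_+=\{x\in V:x_0>0,\ \beta(x,x)>0\}$. Let $\mathrm{dS}^d_{\mathbb C}=\{z:\beta(z,z)=-1\}$ and $\Xi_+=\mathrm{dS}^d_{\mathbb C}\cap(V+iV_+)$. Let $G_{\mathbb C}=\mathrm{SO}_{1+d}(\mathbb C)$ (determinant-one complex linear maps preserving $\beta$) and $K_{\mathbb C}=\{g\in G_{\mathbb C}:ge_0=e_0\}$. Let $h(z_0,z_1,z_2,\dots)=(z_1,z_0,0,\dots,0)$, $\mathcal S_{\pm\pi/2}=\{\zeta\in\mathbb C:|\mathrm{Im}\,\zeta|<\pi/2\}$ and $\Xi_{A_{\mathbb C}}=\exp(\mathcal S_{\pm\pi/2}h)\subset G_{\mathbb C}$. The cut domain is defined as $\mathrm{dS}^{d,\rm cut}_{\mathbb C}:=K_{\mathbb C}\,\Xi_{A_{\mathbb C}}.\Xi_+=\{ka.w: k\in K_{\mathbb C},a\in\Xi_{A_{\mathbb C}},w\in\Xi_+\}$. *)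

(* Defs.v *)
From HB Require Import structures.
From mathcomp Require Import all_boot all_order all_algebra.
From mathcomp Require Import reals.
From mathcomp.analysis Require Import sequences trigo exp.
From mathcomp Require Import complex.
Set Implicit Arguments. Unset Strict Implicit. Unset Printing Implicit Defensive.
Import Order.TTheory GRing.Theory Num.Theory.
Local Open Scope ring_scope.
Local Open Scope complex_scope.

Section Defs.
Variable R : realType.
Local Notation C := R[i].

Definition cexp (z : C) : C :=
  (expR (complex.Re z))%:C * ((cos (complex.Im z)) +i* (sin (complex.Im z))).
Definition ccosh (z : C) : C := (cexp z + cexp (- z)) / 2%:R.
Definition csinh (z : C) : C := (cexp z - cexp (- z)) / 2%:R.

Variable d : nat.
(* C^{1+d} as column vectors indexed by 'I_(d.+1); index 0 is z_0 *)
Definition vec := 'cV[C]_(d.+1).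
Definition i0 : 'I_(d.+1) := ord0.
Definition i1 : 'I_(d.+1) := inord 1.

Definition beta (z w : vec) : C :=
  z i0 0 * w i0 0 - \sum_(j < d.+1 | j != i0) z j 0 * w j 0.

Definition e0 : vec := \col_j (if j == i0 then 1 else 0).

Definition VplusR (x : 'I_(d.+1) -> R) : Prop :=
  0 < x i0 /\ 0 < x i0 ^+ 2 - \sum_(j < d.+1 | j != i0) x j ^+ 2.

Definition dSC (z : vec) : Prop := beta z z = -1.

Definition Xiplus (z : vec) : Prop :=
  dSC z /\ VplusR (fun j => complex.Im (z j 0)).

Definition GC (g : 'M[C]_(d.+1)) : Prop :=
  \det g = 1 /\ forall z w : vec, beta (g *m z) (g *m w) = beta z w.

Definition KC (g : 'M[C]_(d.+1)) : Prop := GC g /\ g *m e0 = e0.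

Definition hmx : 'M[C]_(d.+1) :=
  \matrix_(j, k) (if ((j == i0) && (k == i1)) || ((j == i1) && (k == i0))
                  then 1 else 0).

(* exp(zeta h) = 1 + sinh(zeta) h + (cosh(zeta) - 1) h^2, the closed form of
   the exponential series since h^3 = h. *)
Definition exph (zeta : C) : 'M[C]_(d.+1) :=
  1%:M + csinh zeta *: hmx + (ccosh zeta - 1) *: (hmx *m hmx).

Definition stripS (zeta : C) : Prop := `|complex.Im zeta| < pi / 2%:R.

Definition XiAC (a : 'M[C]_(d.+1)) : Prop :=
  exists zeta, stripS zeta /\ a = exph zeta.

Definition dScut (z : vec) : Prop :=
  exists k a w, KC k /\ XiAC a /\ Xiplus w /\ z = k *m (a *m w).

Definition dScut_rhs (z : vec) : Prop :=
  dSC z /\ ~ (exists t : R, t <= -1 /\ - 'i * z i0 0 = t%:C).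

End Defs.

(* Main.v *)
Require Import Defs.
From HB Require Import structures.
From mathcomp Require Import all_boot all_order all_algebra.
From mathcomp Require Import reals.
From mathcomp.analysis Require Import sequences trigo exp.
From mathcomp Require Import complex.
From mathcomp.algebra_tactics Require Import ring lra.
Import Order.TTheory GRing.Theory Num.Theory.
Local Open Scope ring_scope.
Local Open Scope complex_scope.
Set Implicit Arguments. Unset Strict Implicit. Unset Printing Implicit Defensive.

Section P1.
Variable R : realType.
Variable d : nat.
Hypothesis hd : (0 < d)%N.
Local Notation C := R[i].
Local Notation vec := (vec R d).
Local Notation i0 := (i0 d).
Local Notation i1 := (i1 d).

Lemma i1_val : nat_of_ord i1 = 1%N.
Proof. by rewrite /i1 inordK // ltnS. Qed.

Lemma i1_neq0 : (i1 == i0) = false.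
Proof. by apply/negbTE/eqP => /(congr1 (@nat_of_ord _)); rewrite i1_val. Qed.

Lemma i0_neq1 : (i0 == i1) = false.
Proof. by rewrite eq_sym i1_neq0. Qed.

Lemma beta_split (z w : vec) : beta z w = z i0 0 * w i0 0 - z i1 0 * w i1 0
   - \sum_(j < d.+1 | (j != i0) && (j != i1)) z j 0 * w j 0.
Proof. by rewrite /beta (bigD1 i1) /= ?i1_neq0 // opprD addrA. Qed.

Lemma betaC (z w : vec) : beta z w = beta w z.
Proof. rewrite /beta mulrC; congr (_ - _); apply: eq_bigr => j _; exact: mulrC. Qed.

Lemma betaDl (x y w : vec) : beta (x + y) w = beta x w + beta y w.
Proof.
rewrite /beta !mxE (eq_bigr (fun j => x j 0 * w j 0 + y j 0 * w j 0)).
  by rewrite big_split /=; ring.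
by move=> j _; rewrite !mxE mulrDl.
Qed.

Lemma betaZl (a : C) (x w : vec) : beta (a *: x) w = a * beta x w.
Proof.
rewrite /beta !mxE (eq_bigr (fun j => a * (x j 0 * w j 0))).
  by rewrite -mulr_sumr; ring.
by move=> j _; rewrite !mxE mulrA.
Qed.

Lemma betaNl (x w : vec) : beta (- x) w = - beta x w.
Proof. by rewrite -scaleN1r betaZl mulN1r. Qed.

Lemma betaBl (x y w : vec) : beta (x - y) w = beta x w - beta y w.
Proof. by rewrite betaDl betaNl. Qed.

Lemma betaDr (x y w : vec) : beta w (x + y) = beta w x + beta w y.
Proof. by rewrite betaC betaDl !(betaC w). Qed.

Lemma betaZr (a : C) (x w : vec) : beta w (a *: x) = a * beta w x.
Proof. by rewrite betaC betaZl betaC. Qed.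

Lemma betaBr (x y w : vec) : beta w (x - y) = beta w x - beta w y.
Proof. by rewrite betaC betaBl !(betaC w). Qed.

Lemma beta_e0 (x : vec) : beta x (e0 R d) = x i0 0.
Proof.
rewrite /beta /e0 mxE eqxx mulr1 big1 ?subr0 // => j /negbTE hj.
by rewrite mxE hj mulr0.
Qed.

Lemma hmx_mulE (w : vec) j : (hmx R d *m w) j 0 =
  if j == i0 then w i1 0 else if j == i1 then w i0 0 else 0.
Proof.
rewrite mxE; case: (eqVneq j i0) => [->|hj0].
  rewrite (bigD1 i1) //= big1 ?addr0; first by rewrite mxE !eqxx /= mul1r.
  by move=> k /negbTE hk; rewrite mxE eqxx hk i0_neq1 /= mul0r.
case: (eqVneq j i1) => [->|hj1].
  rewrite (bigD1 i0) //= big1 ?addr0; first by rewrite mxE !eqxx i1_neq0 /= mul1r.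
  by move=> k /negbTE hk; rewrite mxE eqxx hk i1_neq0 /= mul0r.
rewrite big1 // => k _; rewrite mxE (negbTE hj0) (negbTE hj1) /= mul0r //.
Qed.

Lemma exph_mulE (z : C) (w : vec) j : (exph d z *m w) j 0 =
  if j == i0 then ccosh z * w i0 0 + csinh z * w i1 0
  else if j == i1 then csinh z * w i0 0 + ccosh z * w i1 0 else w j 0.
Proof.
have hm : forall v : vec, hmx R d *m v = \col_j (if j == i0 then v i1 0 else if j == i1 then v i0 0 else 0).
  by move=> v; apply/matrixP => k l; rewrite ord1 hmx_mulE mxE.
rewrite /exph !mulmxDl mul1mx -!scalemxAl -mulmxA !hm !mxE.
case: (eqVneq j i0) => [->|hj0]; rewrite ?eqxx ?i1_neq0 ?i0_neq1 /=; first by ring.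
case: (eqVneq j i1) => [->|hj1]; rewrite ?eqxx ?i1_neq0 ?i0_neq1 /=; first by ring.
by rewrite !mulr0 !addr0.
Qed.

End P1.

Section P2.
Variable R : realType.
Local Notation C := R[i].

Lemma oppcE (a b : R) : - (a +i* b) = (-a) +i* (-b) :> C.
Proof. by []. Qed.

Lemma natcE n : (n%:R : C) = n%:R +i* 0.
Proof. by rewrite -[_ +i* 0]/((n%:R : R)%:C) rmorph_nat. Qed.

Lemma cexpE (a b : R) : cexp (a +i* b) = (expR a * cos b) +i* (expR a * sin b).
Proof. rewrite /cexp /=. rewrite -[(expR a)%:C]/(expR a +i* 0). simpc. by []. Qed.

Lemma div2c (u v : C) : u = v * 2 -> u / 2 = v.
Proof. by move->; rewrite mulfK // pnatr_eq0. Qed.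

Lemma ccoshE (a b : R) : ccosh (a +i* b) =
  ((expR a + expR (- a)) / 2 * cos b) +i* ((expR a - expR (- a)) / 2 * sin b).
Proof.
rewrite /ccosh; apply: div2c; rewrite oppcE !cexpE cosN sinN natcE; simpc.
apply/eqP; rewrite eq_complex /=; apply/andP; split; apply/eqP.
  by field; rewrite ?pnatr_eq0.
by field; rewrite ?pnatr_eq0.
Qed.

Lemma csinhE (a b : R) : csinh (a +i* b) =
  ((expR a - expR (- a)) / 2 * cos b) +i* ((expR a + expR (- a)) / 2 * sin b).
Proof.
rewrite /csinh; apply: div2c; rewrite oppcE !cexpE cosN sinN natcE; simpc.
apply/eqP; rewrite eq_complex /=; apply/andP; split; apply/eqP.
  by field; rewrite ?pnatr_eq0.
by field; rewrite ?pnatr_eq0.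
Qed.

Lemma ch2sh2 (z : C) : ccosh z ^+ 2 - csinh z ^+ 2 = 1.
Proof.
case: z => a b; rewrite ccoshE csinhE.
set E := expR a; set F := expR (- a).
have EF : E * F = 1 by rewrite /E /F -expRD subrr expR0.
have cs := cos2Dsin2 b.
have PQ : ((E + F) / 2) ^+ 2 - ((E - F) / 2) ^+ 2 = 1.
  by rewrite -[RHS]EF; field; rewrite ?pnatr_eq0.
rewrite !expr2; simpc.
apply/eqP; rewrite eq_complex /=; apply/andP; split; apply/eqP.
  transitivity ((((E+F)/2)^+2 - ((E-F)/2)^+2) * (cos b ^+ 2 + sin b ^+ 2)); first ring.
  by rewrite PQ cs mulr1.
ring.
Qed.

Lemma ccosh_i (t : R) : ccosh (0 +i* t) = (cos t)%:C.
Proof.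
rewrite ccoshE oppr0 expR0 subrr mul0r mul0r.
by rewrite -[(cos t)%:C]/(cos t +i* 0); congr (_ +i* _); field; rewrite ?pnatr_eq0.
Qed.

Lemma csinh_i (t : R) : csinh (0 +i* t) = 0 +i* sin t.
Proof.
rewrite csinhE oppr0 expR0 subrr mul0r mul0r.
by congr (_ +i* _); field; rewrite ?pnatr_eq0.
Qed.

End P2.

Section P3.
Variable R : realType.
Variable d : nat.
Hypothesis hd : (0 < d)%N.
Local Notation C := R[i].
Local Notation vec := (vec R d).
Local Notation i0 := (i0 d).
Local Notation i1 := (i1 d).
Local Notation i1_neq0 := (@i1_neq0 d hd).
Local Notation i0_neq1 := (@i0_neq1 d hd).
Local Notation beta_split := (@beta_split R d hd).

Lemma det_rank1 n (u : 'cV[C]_n) (v : 'rV[C]_n) :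
  \det (1%:M + u *m v) = 1 + (v *m u) 0 0.
Proof.
have E1 : block_mx 1%:M 0 v 1%:M *m block_mx 1%:M (-u) 0 (1%:M + v *m u)
        = block_mx (1%:M + u *m v) (-u) 0 1%:M *m block_mx 1%:M 0 v 1%:M.
  rewrite !mulmx_block !mul1mx !mulmx1 !mul0mx !mulmx0 !addr0 !add0r.
  by rewrite mulmxN mulNmx addrK addrCA addNr addr0.
have := congr1 determinant E1.
rewrite !det_mulmx !(@det_lblock _ n 1) !(@det_ublock _ n 1) !det1 !mul1r !mulr1.
by move=> <-; rewrite det_mx11 !mxE.
Qed.

Definition Jv (x : vec) : vec := \col_j (if j == i0 then x j 0 else - x j 0).
Definition refl (x : vec) : 'M[C]_(d.+1) :=
  1%:M + x *m ((- (2 / beta x x)) *: (Jv x)^T).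

Lemma Jv_mul (x y : vec) : ((Jv x)^T *m y) 0 0 = beta y x.
Proof.
rewrite mxE /beta (bigD1 i0) //= !mxE eqxx; congr (_ + _); first by rewrite mulrC.
rewrite -sumrN; apply: eq_bigr => j hj; by rewrite !mxE (negbTE hj) mulNr mulrC.
Qed.

Lemma refl_mul (x y : vec) : refl x *m y = y + (- (2 / beta x x) * beta y x) *: x.
Proof.
rewrite /refl mulmxDl mul1mx -mulmxA -scalemxAl -scalemxAr [_ *m y]mx11_scalar.
by rewrite Jv_mul mul_mx_scalar scalerA.
Qed.

Lemma refl_beta (x y w : vec) : beta x x != 0 ->
  beta (refl x *m y) (refl x *m w) = beta y w.
Proof.
move=> hx; rewrite !refl_mul !betaDl !betaDr !betaZl !betaZr (betaC x w).
by field.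
Qed.

Lemma refl_det (x : vec) : beta x x != 0 -> \det (refl x) = -1.
Proof.
move=> hx; rewrite /refl det_rank1 -scalemxAl mxE Jv_mul.
by field.
Qed.

Lemma refl_e0 (x : vec) : x i0 0 = 0 -> refl x *m e0 R d = e0 R d.
Proof. by move=> hx; rewrite refl_mul (betaC (e0 R d)) beta_e0 hx mulr0 scale0r addr0. Qed.

Lemma refl_map (u z : vec) : beta u u = beta z z -> beta (u - z) (u - z) != 0 ->
  refl (u - z) *m u = z.
Proof.
move=> huz hx; rewrite refl_mul.
have e1 : beta (u - z) (u - z) = 2 * (beta u u - beta u z).
  by rewrite betaBl !betaBr huz (betaC z u); ring.
have e2 : beta u (u - z) = beta u u - beta u z by rewrite betaBr.
have hne : beta u u - beta u z != 0.
  by apply: contra hx; rewrite e1 => /eqP ->; rewrite mulr0.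
have -> : - (2 / beta (u - z) (u - z)) * beta u (u - z) = -1.
  by rewrite e2 e1; field.
by rewrite scaleN1r opprB addrC subrK.
Qed.

Lemma KC1 : KC (1%:M : 'M[C]_(d.+1)).
Proof. by split; [split; [rewrite det1 | move=> z w; rewrite !mul1mx] | rewrite mul1mx]. Qed.

Lemma KC_refl2 (x y : vec) : beta x x != 0 -> beta y y != 0 -> x i0 0 = 0 -> y i0 0 = 0 ->
  KC (refl x *m refl y).
Proof.
move=> hx hy hx0 hy0; split; [split|].
- by rewrite det_mulmx !refl_det // mulrNN mulr1.
- by move=> z w; rewrite -!mulmxA !refl_beta.
- by rewrite -mulmxA !refl_e0.
Qed.

Lemma KC_fix0 (k : 'M[C]_(d.+1)) (x : vec) : KC k -> (k *m x) i0 0 = x i0 0.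
Proof. by case=> [[_ hb] he]; have := hb x (e0 R d); rewrite he !beta_e0. Qed.

End P3.

Section P4.
Variable R : realType.

Lemma real_core (c s C S x0 x1 y0 y1 X2 Y2 P t : R) :
  c^+2 + s^+2 = 1 -> 0 < c -> C^+2 - S^+2 = 1 -> 0 < C ->
  x0^+2 - y0^+2 - (x1^+2 - y1^+2) - (X2 - Y2) = -1 ->
  x0 * y0 - x1 * y1 - P = 0 ->
  0 < y0 -> 0 < y0^+2 - y1^+2 - Y2 ->
  0 <= X2 -> 0 <= Y2 -> (forall l, 0 <= X2 + 2 * l * P + l^+2 * Y2) ->
  c * (C * x0 + S * x1) - s * (S * y0 + C * y1) = 0 ->
  c * (C * y0 + S * y1) + s * (S * x0 + C * x1) = t -> t <= -1 -> False.
Proof.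
move=> hcs hc hCS hC hE hX hy0 hV hX2 hY2 hl.
set X0 := C * x0 + S * x1; set X1 := S * x0 + C * x1; set Y0 := C * y0 + S * y1; set Y1 := S * y0 + C * y1.
move=> hre him ht.
have eX : X0^+2 - X1^+2 = x0^+2 - x1^+2.
  transitivity ((C^+2 - S^+2) * (x0^+2 - x1^+2)); first by rewrite /X0 /X1; ring.
  by rewrite hCS mul1r.
have eY : Y0^+2 - Y1^+2 = y0^+2 - y1^+2.
  transitivity ((C^+2 - S^+2) * (y0^+2 - y1^+2)); first by rewrite /Y0 /Y1; ring.
  by rewrite hCS mul1r.
have eXY : X0 * Y0 - X1 * Y1 = x0 * y0 - x1 * y1.
  transitivity ((C^+2 - S^+2) * (x0 * y0 - x1 * y1)); first by rewrite /X0 /X1 /Y0 /Y1; ring.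
  by rewrite hCS mul1r.
have y1sq : y1^+2 < y0^+2 by lra.
have hp : 0 < Y0 * (C * y0 - S * y1).
  have -> : Y0 * (C * y0 - S * y1) = (C^+2 - S^+2) * y0^+2 + S^+2 * (y0^+2 - y1^+2).
    by rewrite /Y0; ring.
  rewrite hCS mul1r; apply: ltr_pwDl; first by rewrite exprn_gt0.
  by apply: mulr_ge0; [apply: sqr_ge0 | lra].
have hs : 0 < Y0 + (C * y0 - S * y1) by rewrite /Y0; nra.
have hY0 : 0 < Y0 by nra.
clearbody X0 X1 Y0 Y1.
set B := - s * Y0 + c * X1; set D := s * X0 + c * Y1.
have eY0 : Y0 = c * t - s * B by rewrite /B -him; transitivity ((c^+2 + s^+2) * Y0); [rewrite hcs mul1r | ring].
have eX1 : X1 = s * t + c * B by rewrite /B -him; transitivity ((c^+2 + s^+2) * X1); [rewrite hcs mul1r | ring].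
have eX0 : X0 = s * D.
  rewrite /D; transitivity ((c^+2 + s^+2) * X0); first by rewrite hcs mul1r.
  transitivity (c * (c * X0 - s * Y1) + s * (s * X0 + c * Y1)); first by ring.
  by rewrite hre mulr0 add0r.
have eY1 : Y1 = c * D.
  rewrite /D; transitivity ((c^+2 + s^+2) * Y1); first by rewrite hcs mul1r.
  transitivity (- s * (c * X0 - s * Y1) + c * (s * X0 + c * Y1)); first by ring.
  by rewrite hre mulr0 add0r.
clearbody B D.
have hP : P = - (B * D).
  have -> : P = X0 * Y0 - X1 * Y1 by rewrite eXY; lra.
  rewrite eX0 eY0 eX1 eY1; transitivity (- (B * D) * (c^+2 + s^+2)); first by ring.
  by rewrite hcs mulr1.
have hsB : s * B < c * t by lra.
have hcA : c * t < 0 by nra.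
have hsB0 : s * B < 0 by lra.
have hb : s * (s * t + c * B) < -1.
  have : c * (s * B) < c * (c * t) by rewrite ltr_pM2l.
  have -> : s * (s * t + c * B) = t * (c^+2 + s^+2) - c * (c * t) + c * (s * B) by ring.
  rewrite hcs mulr1; lra.
have hs2 : s^+2 <= 1 by nra.
have hQ : 1 < (s * t + c * B)^+2.
  set Q := s * t + c * B in hb *.
  have h1 : 1 < (s * Q)^+2 by nra.
  rewrite exprMn in h1; nra.
have hXd : X2 < s^+2 * D^+2.
  have : X2 = 1 + (X0^+2 - X1^+2) - (Y0^+2 - Y1^+2) + Y2 by lra.
  have : Y2 < Y0^+2 - Y1^+2 by lra.
  have -> : X0^+2 - X1^+2 = s^+2 * D^+2 - (s * t + c * B)^+2 by rewrite eX0 eX1; ring.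
  lra.
have hYb : Y2 < s^+2 * B^+2.
  have h1 : Y2 < Y0^+2 by nra.
  have h2 : Y0 < - (s * B) by lra.
  have h3 : Y0^+2 < (s * B)^+2 by nra.
  by rewrite exprMn in h3; lra.
have hs0 : s != 0 by apply: contraTneq hsB0 => ->; rewrite mul0r ltxx.
have hB0 : B != 0 by apply: contraTneq hsB0 => ->; rewrite mulr0 ltxx.
have hsBn : s^+2 * B != 0 by rewrite mulf_neq0 // expf_neq0.
have h := hl (D / (s^+2 * B)).
have h2 : 0 <= (s^+2 * B)^+2 * (X2 + 2 * (D / (s^+2 * B)) * P + (D / (s^+2 * B))^+2 * Y2).
  by apply: mulr_ge0; [apply: sqr_ge0|].
have e : (s^+2 * B)^+2 * (X2 + 2 * (D / (s^+2 * B)) * P + (D / (s^+2 * B))^+2 * Y2)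
   = s^+2 * B^+2 * (s^+2 * X2) - 2 * (s^+2 * B^+2 * D^+2) + D^+2 * Y2.
  by rewrite hP; field; rewrite hB0 hs0.
rewrite e in h2.
have h3 : D^+2 * Y2 <= D^+2 * (s^+2 * B^+2) by rewrite ler_wpM2l ?sqr_ge0 // ltW.
have h4 : s^+2 * B^+2 * D^+2 <= s^+2 * B^+2 * (s^+2 * X2).
  have : D^+2 * (s^+2 * B^+2) = s^+2 * B^+2 * D^+2 by ring.
  lra.
have hK : 0 < s^+2 * B^+2 by nra.
have h5 : D^+2 <= s^+2 * X2 by rewrite -(ler_pM2l hK).
have h6 : s^+2 * X2 <= X2 by nra.
have h7 : s^+2 * D^+2 <= D^+2 by nra.
lra.
Qed.
End P4.

Section P5.
Variable R : realType.
Variable d : nat.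
Hypothesis hd : (0 < d)%N.
Local Notation C := R[i].
Local Notation vec := (vec R d).
Local Notation i0 := (i0 d).
Local Notation i1 := (i1 d).
Local Notation i1_neq0 := (@i1_neq0 d hd).
Local Notation i0_neq1 := (@i0_neq1 d hd).
Local Notation beta_split := (@beta_split R d hd).
Local Notation exph_mulE := (@exph_mulE R d hd).

Lemma sumcE (I : finType) (P : pred I) (F : I -> C) :
  \sum_(i | P i) F i =
  (\sum_(i | P i) complex.Re (F i)) +i* (\sum_(i | P i) complex.Im (F i)).
Proof.
apply: (big_rec3 (fun a b c => a = b +i* c)) => // i y1 y2 y3 _ ->.
by case: (F i).
Qed.

Lemma exph_beta (z : C) (w : vec) : beta (exph d z *m w) (exph d z *m w) = beta w w.
Proof.
rewrite !beta_split.
have -> : \sum_(j < d.+1 | (j != i0) && (j != i1)) (exph d z *m w) j 0 * (exph d z *m w) j 0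
   = \sum_(j < d.+1 | (j != i0) && (j != i1)) w j 0 * w j 0.
  by apply: eq_bigr => j /andP [/negbTE h0 /negbTE h1]; rewrite exph_mulE h0 h1.
rewrite !exph_mulE !eqxx i1_neq0.
set S := \sum_(j < d.+1 | _) _.
transitivity ((ccosh z ^+2 - csinh z ^+2) * (w i0 0 * w i0 0 - w i1 0 * w i1 0) - S).
  by ring.
by rewrite ch2sh2 mul1r.
Qed.

Lemma cut_ineq (z : C) (w : vec) : stripS z -> Xiplus w ->
  ~ (exists t : R, t <= -1 /\ - 'i * (ccosh z * w i0 0 + csinh z * w i1 0) = t%:C).
Proof.
case: z => a b hz [hb [hy0 hV]] [t [ht he]].
rewrite ccoshE csinhE in he.
move: hb; rewrite /dSC beta_split.
set X2 := \sum_(j < d.+1 | (j != i0) && (j != i1)) complex.Re (w j 0) ^+ 2.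
set Y2 := \sum_(j < d.+1 | (j != i0) && (j != i1)) complex.Im (w j 0) ^+ 2.
set P := \sum_(j < d.+1 | (j != i0) && (j != i1)) complex.Re (w j 0) * complex.Im (w j 0).
have -> : \sum_(j < d.+1 | (j != i0) && (j != i1)) w j 0 * w j 0 = (X2 - Y2) +i* (2 * P).
  rewrite sumcE /X2 /Y2 /P -sumrB mulr_sumr; congr (_ +i* _); apply: eq_bigr => j _;
  case: (w j 0) => u v; simpc => /=; ring.
have hl : forall l, 0 <= X2 + 2 * l * P + l ^+ 2 * Y2.
  move=> l; have -> : X2 + 2 * l * P + l ^+ 2 * Y2 =
     \sum_(j < d.+1 | (j != i0) && (j != i1)) (complex.Re (w j 0) + l * complex.Im (w j 0)) ^+ 2.
    rewrite /X2 /Y2 /P mulr_sumr mulr_sumr -!big_split /=; apply: eq_bigr => j _; ring.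
  by apply: sumr_ge0 => j _; apply: sqr_ge0.
have hX2 : 0 <= X2 by apply: sumr_ge0 => j _; apply: sqr_ge0.
have hY2 : 0 <= Y2 by apply: sumr_ge0 => j _; apply: sqr_ge0.
move: hV; rewrite /= (bigD1 i1) /= ?i1_neq0 // -/Y2 => hV.
move: hy0 hV he; rewrite /=.
case: (w i0 0) => x0 y0; case: (w i1 0) => x1 y1 /= hy0 hV he hb.
move/eqP: he; rewrite -[t%:C]/(t +i* 0) oppcE; simpc; rewrite eq_complex /=.
move=> /andP [/eqP e1 /eqP e2].
move/eqP: hb; rewrite -[1 : C]/(1 +i* 0); simpc; rewrite eq_complex /=.
move=> /andP [/eqP h1 /eqP h2].
set E := expR a in e1 e2; set F := expR (- a) in e1 e2.
have EF : E * F = 1 by rewrite /E /F -expRD subrr expR0.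
have hE : 0 < E by apply: expR_gt0.
have hF : 0 < F by apply: expR_gt0.
have PQ : ((E + F) / 2) ^+ 2 - ((E - F) / 2) ^+ 2 = 1.
  by rewrite -[RHS]EF; field; rewrite ?pnatr_eq0.
have hC : 0 < (E + F) / 2 by apply: divr_gt0 => //; apply: addr_gt0.
have hc : 0 < cos b.
  apply: cos_gt0_pihalf; move: hz; rewrite /stripS /= ltr_norml.
  by case/andP => -> ->.
apply: (@real_core R (cos b) (sin b) ((E + F) / 2) ((E - F) / 2) x0 x1 y0 y1 X2 Y2 P t
  (cos2Dsin2 b) hc PQ hC _ _ hy0 _ hX2 hY2 hl _ _ ht).
- rewrite !expr2; lra.
- lra.
- lra.
- lra.
- lra.
Qed.

Lemma sub_dir (z : vec) : dScut z -> dScut_rhs z.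
Proof.
case=> k [a [w [hk [[zeta [hzeta ->]] [hw ->]]]]].
split.
- rewrite /dSC; have [[_ hb] _] := hk.
  by rewrite hb exph_beta; case: hw.
- by rewrite KC_fix0 // exph_mulE eqxx; apply: cut_ineq.
Qed.
End P5.

Section P6.
Variable R : realType.
Variable d : nat.
Hypothesis hd : (0 < d)%N.
Local Notation C := R[i].
Local Notation vec := (vec R d).
Local Notation i0 := (i0 d).
Local Notation i1 := (i1 d).
Local Notation i1_neq0 := (@i1_neq0 d hd).
Local Notation i0_neq1 := (@i0_neq1 d hd).
Local Notation beta_split := (@beta_split R d hd).
Local Notation exph_mulE := (@exph_mulE R d hd).
Local Notation exph_beta := (@exph_beta R d hd).

Lemma xi_of (u : vec) (th : R) : beta u u = -1 -> `|th| < pi / 2 ->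
  0 < cos th * complex.Im (u i0 0) - sin th * complex.Re (u i1 0) ->
  (cos th * complex.Im (u i1 0) - sin th * complex.Re (u i0 0)) ^+ 2
     + \sum_(j < d.+1 | (j != i0) && (j != i1)) complex.Im (u j 0) ^+ 2
     < (cos th * complex.Im (u i0 0) - sin th * complex.Re (u i1 0)) ^+ 2 ->
  exists a w, XiAC a /\ Xiplus w /\ a *m w = u.
Proof.
move=> hu hth h1 h2.
exists (exph d (0 +i* th)), (exph d (0 +i* (- th)) *m u).
have eN : 0 +i* (- sin th) = - (0 +i* sin th) :> C by rewrite oppcE oppr0.
split; [exists (0 +i* th); split => // | split; [split|]].
- by rewrite /dSC exph_beta.
- rewrite /VplusR /= exph_mulE eqxx ccosh_i csinh_i cosN sinN.
  rewrite (bigD1 i1) /= ?i1_neq0 // exph_mulE i1_neq0 eqxx ccosh_i csinh_i cosN sinN.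
  have -> : \sum_(j < d.+1 | (j != i0) && (j != i1))
      complex.Im ((exph d (0 +i* - th) *m u) j 0) ^+ 2 =
      \sum_(j < d.+1 | (j != i0) && (j != i1)) complex.Im (u j 0) ^+ 2.
    by apply: eq_bigr => j /andP [/negbTE h0 /negbTE h3]; rewrite exph_mulE h0 h3.
  move: h1 h2; case: (u i0 0) => x0 y0; case: (u i1 0) => x1 y1 /=.
  move=> h1 h2.
  split; first by lra.
  lra.
- apply/matrixP => j l; rewrite ord1 !exph_mulE !eqxx i1_neq0 !ccosh_i !csinh_i cosN sinN eN.
  have h := ch2sh2 (0 +i* th); rewrite ccosh_i csinh_i in h.
  case: (eqVneq j i0) => [->|hj0].
    rewrite ?eqxx ?i1_neq0; transitivity (((cos th)%:C ^+2 - (0 +i* sin th)^+2) * u i0 0); first by ring.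
    by rewrite h mul1r.
  rewrite ?(negbTE hj0); case: (eqVneq j i1) => [->|hj1].
    rewrite ?eqxx ?i1_neq0; transitivity (((cos th)%:C ^+2 - (0 +i* sin th)^+2) * u i1 0); first by ring.
    by rewrite h mul1r.
  by rewrite ?(negbTE hj0) ?(negbTE hj1).
Qed.


Lemma cos_atan_gt0 (t : R) : 0 < cos (atan t).
Proof. by rewrite cos_atan invr_gt0 sqrtr_gt0; nra. Qed.

Lemma sin_atan (t : R) : sin (atan t) = t * cos (atan t).
Proof.
have hc := cos_atan_gt0 t.
have h := atanK t; rewrite /tan in h.
by rewrite -[X in X * _]h divfK // gt_eqF.
Qed.

Lemma atan_strip (t : R) : `|atan t| < pi / 2.
Proof. by rewrite ltr_norml atan_gtNpi2 atan_ltpi2. Qed.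

Lemma case_plane (u : vec) : (forall j, j != i0 -> j != i1 -> u j 0 = 0) ->
  beta u u = -1 -> ~ (exists t : R, t <= -1 /\ - 'i * u i0 0 = t%:C) ->
  exists a w, XiAC a /\ Xiplus w /\ a *m w = u.
Proof.
move=> hr hu hcut.
have hS : \sum_(j < d.+1 | (j != i0) && (j != i1)) complex.Im (u j 0) ^+ 2 = 0.
  by rewrite big1 // => j /andP [h0 h1]; rewrite hr // expr0n.
have hb : u i0 0 * u i0 0 - u i1 0 * u i1 0 = -1.
  move: hu; rewrite beta_split big1 ?subr0 // => j /andP [h0 h1]; by rewrite hr // mul0r.
have E0 : u i0 0 = complex.Re (u i0 0) +i* complex.Im (u i0 0) by case: (u i0 0).
have E1 : u i1 0 = complex.Re (u i1 0) +i* complex.Im (u i1 0) by case: (u i1 0).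
set X := complex.Re (u i0 0) in E0 *; set Y := complex.Im (u i0 0) in E0 *.
set P := complex.Re (u i1 0) in E1 *; set Q := complex.Im (u i1 0) in E1 *.
rewrite E0 in hcut; rewrite E0 E1 in hb.
move/eqP: hb; rewrite -[1 : C]/(1 +i* 0); simpc; rewrite eq_complex /=.
move=> /andP [/eqP h1 /eqP h2].
set a := X - P; set b := Y - Q; set g := X + P; set h := Y + Q.
have e1 : a * g - b * h = -1 by rewrite /a /b /g /h; lra.
have e2 : a * h + b * g = 0 by rewrite /a /b /g /h; lra.
have hab : 0 < b \/ a != 0.
  case: (ltP 0 b) => hb0; first by left.
  right; apply/negP => /eqP ha0.
  apply: hcut; exists Y; split; last first.
    have bh : b * h = 1 by move: e1; rewrite ha0 mul0r; lra.
    have hg : g = 0.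
      transitivity (g * (b * h)); first by rewrite bh mulr1.
      have bg : b * g = 0 by move: e2; rewrite ha0 mul0r add0r.
      by rewrite mulrA (mulrC g) bg mul0r.
    have hX : X = 0 by move: ha0 hg; rewrite /a /g; lra.
    by rewrite hX -[Y%:C]/(Y +i* 0); simpc.
  have bh : b * h = 1 by move: e1; rewrite ha0 mul0r; lra.
  have : Y = (b + h) / 2 by rewrite /b /h; field.
  move=> ->.
  have hbn : b < 0 by case: (ltgtP b 0) hb0 bh => // ->; rewrite mul0r; lra.
  have hhn : h < 0 by nra.
  have hs : 4 <= (b + h) ^+ 2.
    have -> : (b + h) ^+ 2 = (b - h) ^+ 2 + 4 * (b * h) by ring.
    by rewrite bh mulr1 lerDr sqr_ge0.
  have : b + h <= -2 by nra.
  lra.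
pose tt := if 0 < b then 0 else (1 - b) / a.
have hK : 0 < b + tt * a.
  rewrite /tt; case: ifP => hb0; first by rewrite mul0r addr0.
  case: hab => [|ha]; first by rewrite hb0.
  by rewrite divfK // addrC subrK.
set N := a ^+ 2 + b ^+ 2.
have hN0 : 0 < N.
  rewrite /N; case: hab => [hb0|ha]; first by nra.
  have : 0 < a ^+ 2 by rewrite exprn_even_gt0.
  nra.
have hhN : h * N = b.
  transitivity (a * (a * h + b * g) - b * (a * g - b * h) ); first by rewrite /N; ring.
  by rewrite e1 e2; ring.
have hgN : g * N = - a.
  transitivity (a * (a * g - b * h) + b * (a * h + b * g)); first by rewrite /N; ring.
  by rewrite e1 e2; ring.
have hL : 0 < h - tt * g.
  have : (h - tt * g) * N = b + tt * a by rewrite mulrBl -mulrA hhN hgN; ring.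
  nra.
have hU : 0 < Y - tt * P by move: hK hL; rewrite /a /b /g /h; lra.
have hUV : (Q - tt * X) ^+ 2 < (Y - tt * P) ^+ 2.
  rewrite -subr_gt0.
  have -> : (Y - tt * P) ^+ 2 - (Q - tt * X) ^+ 2 = (b + tt * a) * (h - tt * g).
    by rewrite /a /b /g /h; ring.
  exact: mulr_gt0.
have hc := cos_atan_gt0 tt.
apply: (xi_of hu (atan_strip tt)); rewrite ?hS ?addr0 sin_atan -/X -/Y -/P -/Q.
  have -> : cos (atan tt) * Y - tt * cos (atan tt) * P = cos (atan tt) * (Y - tt * P) by ring.
  exact: mulr_gt0.
have -> : cos (atan tt) * Y - tt * cos (atan tt) * P = cos (atan tt) * (Y - tt * P) by ring.
have -> : cos (atan tt) * Q - tt * cos (atan tt) * X = cos (atan tt) * (Q - tt * X) by ring.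
by rewrite !exprMn ltr_pM2l // exprn_gt0.
Qed.

End P6.

Section P7.
Variable R : realType.
Variable d : nat.
Hypothesis hd : (0 < d)%N.
Local Notation C := R[i].
Local Notation vec := (vec R d).
Local Notation i0 := (i0 d).
Local Notation i1 := (i1 d).
Local Notation i1_neq0 := (@i1_neq0 d hd).
Local Notation i0_neq1 := (@i0_neq1 d hd).
Local Notation beta_split := (@beta_split R d hd).
Local Notation exph_mulE := (@exph_mulE R d hd).
Local Notation exph_beta := (@exph_beta R d hd).
Local Notation case_plane := (@case_plane R d hd).
Local Notation xi_of := (@xi_of R d hd).

Lemma caseA (z : vec) : dSC z -> ~ (exists t : R, t <= -1 /\ - 'i * z i0 0 = t%:C) ->
  \sum_(j < d.+1 | j != i0) z j 0 * z j 0 != 0 -> dScut z.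
Proof.
move=> hz hcut hq.
have hz' : z i0 0 * z i0 0 - \sum_(j < d.+1 | j != i0) z j 0 * z j 0 = -1 by exact: hz.
set q := \sum_(j < d.+1 | j != i0) z j 0 * z j 0 in hz' hq.
have hq' : q = z i0 0 * z i0 0 + 1.
  by rewrite -[1]opprK -hz'; ring.
pose r := sqrtc q.
have hr : r ^+ 2 = q := sqr_sqrtc q.
pose u1 := if r * z i1 0 + q != 0 then r else - r.
have hu1 : u1 ^+ 2 = q by rewrite /u1; case: ifP => _; rewrite ?sqrrN hr.
have hu1z : u1 * z i1 0 + q != 0.
  rewrite /u1; case: ifP => // /negbFE /eqP h.
  have -> : - r * z i1 0 + q = 2 * q.
    by rewrite mulNr -[X in - X](addrK q) h sub0r opprK -mulr2n mulr_natl.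
  by rewrite mulf_neq0 // pnatr_eq0.
pose u : vec := \col_j (if j == i0 then z i0 0 else if j == i1 then u1 else 0).
pose m : vec := \col_j (if j == i0 then z i0 0 else if j == i1 then - u1 else 0).
have bu : forall v : vec, beta u v = z i0 0 * v i0 0 - u1 * v i1 0.
  move=> v; rewrite beta_split !mxE eqxx i1_neq0 eqxx big1 ?subr0 //.
  by move=> j /andP [/negbTE h0 /negbTE h1]; rewrite mxE h0 h1 mul0r.
have bm : forall v : vec, beta m v = z i0 0 * v i0 0 + u1 * v i1 0.
  move=> v; rewrite beta_split !mxE eqxx i1_neq0 eqxx big1 ?subr0 ?mulNr ?opprK //.
  by move=> j /andP [/negbTE h0 /negbTE h1]; rewrite mxE h0 h1 mul0r.
have huu : beta u u = -1.
  rewrite bu !mxE eqxx i1_neq0 eqxx -[u1 * u1]expr2 hu1 hq'; ring.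
have hmm : beta m m = -1.
  rewrite bm !mxE eqxx i1_neq0 eqxx mulrN -[u1 * u1]expr2 hu1 hq'; ring.
have hum : beta (u - m) (u - m) != 0.
  have -> : beta (u - m) (u - m) = - 4%:R * q.
    rewrite betaBl !betaBr !bu !bm !mxE !eqxx !i1_neq0 /= -hu1; ring.
  by rewrite mulf_neq0 // oppr_eq0 pnatr_eq0.
have hmz : beta (m - z) (m - z) != 0.
  have -> : beta (m - z) (m - z) = - 2%:R * (u1 * z i1 0 + q).
    rewrite betaBl !betaBr !bm (betaC z m) bm hz !mxE !eqxx !i1_neq0 /= mulrN -[u1 * u1]expr2 hu1 hq'; ring.
  by rewrite mulf_neq0 // oppr_eq0 pnatr_eq0.
have [a [w [ha [hw hawu]]]] : exists a w, XiAC a /\ Xiplus w /\ a *m w = u.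
  apply: case_plane => //.
    by move=> j /negbTE h0 /negbTE h1; rewrite mxE h0 h1.
  by rewrite mxE eqxx.
exists (refl (m - z) *m refl (u - m)), a, w; split.
  apply: KC_refl2 => //; by rewrite !mxE ?eqxx subrr.
split => //; split => //.
rewrite hawu -mulmxA refl_map ?huu ?hmm // refl_map ?hmm //.
Qed.


Lemma caseB (z : vec) : dSC z -> ~ (exists t : R, t <= -1 /\ - 'i * z i0 0 = t%:C) ->
  (forall j, j != i0 -> z j 0 = 0) -> dScut z.
Proof.
move=> hz hcut hall.
have [a [w [ha [hw hawu]]]] : exists a w, XiAC a /\ Xiplus w /\ a *m w = z.
  by apply: case_plane => // j h0 _; apply: hall.
exists 1%:M, a, w; split; first exact: KC1.
by split => //; split => //; rewrite hawu mul1mx.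
Qed.

Lemma sum_rest1 (F : 'I_(d.+1) -> C) (p : 'I_(d.+1)) : p != i0 -> p != i1 ->
  (forall j, j != i0 -> j != i1 -> j != p -> F j = 0) ->
  \sum_(j < d.+1 | (j != i0) && (j != i1)) F j = F p.
Proof.
move=> hp0 hp1 hF; rewrite (bigD1 p) /=; last by rewrite hp0 hp1.
rewrite big1 ?addr0 // => j /andP [/andP [h0 h1] h2]; exact: hF.
Qed.

Lemma sum_rest1R (F : 'I_(d.+1) -> R) (p : 'I_(d.+1)) : p != i0 -> p != i1 ->
  (forall j, j != i0 -> j != i1 -> j != p -> F j = 0) ->
  \sum_(j < d.+1 | (j != i0) && (j != i1)) F j = F p.
Proof.
move=> hp0 hp1 hF; rewrite (bigD1 p) /=; last by rewrite hp0 hp1.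
rewrite big1 ?addr0 // => j /andP [/andP [h0 h1] h2]; exact: hF.
Qed.

Lemma sum_split1 (F : 'I_(d.+1) -> C) :
  \sum_(j < d.+1 | j != i0) F j = F i1 + \sum_(j < d.+1 | (j != i0) && (j != i1)) F j.
Proof. by rewrite (bigD1 i1) //= i1_neq0. Qed.


Lemma i_neq0 : ('i : C) != 0.
Proof. by rewrite eq_complex /= oner_eq0 andbF. Qed.

Lemma ii : ('i : C) * 'i = -1.
Proof. by rewrite -expr2 sqr_i. Qed.

Lemma caseC (z : vec) : dSC z -> ~ (exists t : R, t <= -1 /\ - 'i * z i0 0 = t%:C) ->
  \sum_(j < d.+1 | j != i0) z j 0 * z j 0 = 0 ->
  forall p, p != i0 -> p != i1 -> z p 0 != 0 -> dScut z.
Proof.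
move=> hz hcut hq p hp0 hp1 hzp.
have hz' : z i0 0 * z i0 0 - \sum_(j < d.+1 | j != i0) z j 0 * z j 0 = -1 by exact: hz.
rewrite hq subr0 in hz'.
have hz0 : z i0 0 = 'i.
  have : (z i0 0 - 'i) * (z i0 0 + 'i) = 0.
    transitivity (z i0 0 * z i0 0 - 'i * 'i); first by ring.
    by rewrite hz' ii subrr.
  move/eqP; rewrite mulf_eq0 => /orP [] /eqP h.
    by apply/eqP; rewrite -subr_eq0 h.
  exfalso; apply: hcut; exists (-1); split => //.
  have -> : z i0 0 = - 'i by apply/eqP; rewrite -subr_eq0 opprK h.
  by rewrite mulrNN ii rmorphN1.
pose S0 := (z i1 0)^* + 'i * (z p 0)^*.
pose e : R := if S0 == 0 then -1 else 1.
have he2 : e ^+ 2 = 1 by rewrite /e; case: ifP => _; rewrite ?sqrrN expr1n.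
have hec : e%:C * e%:C = 1 by rewrite -rmorphM -expr2 he2 rmorph1.
have hS1 : (z i1 0)^* + e%:C * 'i * (z p 0)^* != 0.
  rewrite /e; case: ifP => h.
    have -> : (z i1 0)^* + (-1)%:C * 'i * (z p 0)^* = S0 - 2%:R * 'i * (z p 0)^*.
      by rewrite /S0 rmorphN1; ring.
    rewrite (eqP h) sub0r oppr_eq0 !mulf_neq0 ?pnatr_eq0 ?i_neq0 //.
    by rewrite conjc_eq0.
  by rewrite rmorph1 mul1r; apply: negbT.
pose u : vec := \col_j (if j == i0 then 'i else if j == i1 then 1
                       else if j == p then e%:C * 'i else 0).
pose m : vec := \col_j (if j == i0 then 'i else (z j 0)^*).
have bu : forall v : vec, beta u v = 'i * v i0 0 - (v i1 0 + e%:C * 'i * v p 0).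
  move=> v; rewrite /beta sum_split1 (@sum_rest1 _ p) //.
    by rewrite !mxE eqxx i1_neq0 eqxx (negbTE hp0) (negbTE hp1) eqxx mul1r.
  by move=> j h0 h1 h2; rewrite mxE (negbTE h0) (negbTE h1) (negbTE h2) mul0r.
have bm : forall v : vec, beta m v = 'i * v i0 0 - \sum_(j < d.+1 | j != i0) (z j 0)^* * v j 0.
  move=> v; rewrite /beta mxE eqxx; congr (_ - _).
  by apply: eq_bigr => j hj; rewrite mxE (negbTE hj).
have huu : beta u u = -1.
  rewrite bu !mxE eqxx i1_neq0 eqxx (negbTE hp0) (negbTE hp1) eqxx.
  by rewrite mulrACA hec mul1r ii addrN subr0.
have hmm : beta m m = -1.
  rewrite bm mxE eqxx ii.
  have -> : \sum_(j < d.+1 | j != i0) (z j 0)^* * m j 0 =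
            (\sum_(j < d.+1 | j != i0) z j 0 * z j 0)^*.
    rewrite rmorph_sum; apply: eq_bigr => j hj; by rewrite mxE (negbTE hj) rmorphM.
  by rewrite hq rmorph0 subr0.
set S2 := \sum_(j < d.+1 | j != i0) (z j 0)^* * z j 0.
have hS2 : S2 != 0.
  apply/negP => /eqP h; move: (congr1 (@complex.Re R) h); rewrite /S2 sumcE /= => hre.
  have hpos : forall j, 0 <= complex.Re ((z j 0)^* * z j 0).
    move=> j; case: (z j 0) => x y; simpc => /=; nra.
  have hpp : 0 < complex.Re ((z p 0)^* * z p 0).
    move: hzp; case: (z p 0) => x y hxy; simpc => /=.
    have : (x != 0) || (y != 0).
      apply: contraNT hxy; rewrite negb_or => /andP [/negPn/eqP -> /negPn/eqP ->].
      by [].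
    case/orP => hh.
      have : 0 < x ^+ 2 by rewrite exprn_even_gt0.
      nra.
    have : 0 < y ^+ 2 by rewrite exprn_even_gt0.
    nra.
  move: hre; rewrite (bigD1 p) //=.
  have : 0 <= \sum_(j < d.+1 | (j != i0) && (j != p)) complex.Re ((z j 0)^* * z j 0).
    by apply: sumr_ge0 => j _; apply: hpos.
  lra.
have hum : beta (u - m) (u - m) != 0.
  have -> : beta (u - m) (u - m) = 2%:R * ((z i1 0)^* + e%:C * 'i * (z p 0)^*).
    rewrite betaBl !betaBr (betaC m u) huu hmm bu !mxE eqxx i1_neq0 (negbTE hp0) ii.
    ring.
  by rewrite mulf_neq0 // pnatr_eq0.
have hmz : beta (m - z) (m - z) != 0.
  have -> : beta (m - z) (m - z) = 2%:R * S2.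
    rewrite betaBl !betaBr (betaC z m) hmm hz bm hz0 ii -/S2.
    ring.
  by rewrite mulf_neq0 // pnatr_eq0.
have [a [w [ha [hw hawu]]]] : exists a w, XiAC a /\ Xiplus w /\ a *m w = u.
  have hc := cos_atan_gt0 (-1 : R).
  have hc2 : cos (atan (-1 : R)) ^+ 2 = 2%:R^-1.
    rewrite cos_atan exprVn sqr_sqrtr; last by lra.
    by congr (_^-1); rewrite sqrrN expr1n.
  apply: (xi_of huu (atan_strip (-1))); rewrite sin_atan !mxE eqxx i1_neq0 eqxx /=.
    lra.
  rewrite (@sum_rest1R _ p) //; last first.
    by move=> j h0 h1 h2; rewrite mxE (negbTE h0) (negbTE h1) (negbTE h2) /= expr0n.
  rewrite mxE (negbTE hp0) (negbTE hp1) eqxx -[e%:C]/(e +i* 0); simpc => /=.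
  rewrite expr0n /= add0r he2.
  have -> : (cos (atan (-1 : R)) + cos (atan (-1))) ^+ 2 = 4%:R * cos (atan (-1 : R)) ^+ 2 by ring.
  rewrite hc2.
  have -> : 4%:R * 2%:R^-1 = 2%:R :> R by field.
  lra.
exists (refl (m - z) *m refl (u - m)), a, w; split.
  apply: KC_refl2 => //; by rewrite !mxE ?eqxx ?hz0 subrr.
split => //; split => //.
by rewrite hawu -mulmxA refl_map ?huu ?hmm // refl_map ?hmm.
Qed.

Lemma sup_dir (z : vec) : dScut_rhs z -> dScut z.
Proof.
case=> hz hcut.
case: (eqVneq (\sum_(j < d.+1 | j != i0) z j 0 * z j 0) 0) => hq; last exact: caseA.
case: (boolP [exists j, (j != i0) && (j != i1) && (z j 0 != 0)]) => hex.
  by case/existsP: hex => p /andP [/andP [hp0 hp1] hzp]; apply: (caseC hz hcut hq hp0 hp1 hzp).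
have hrest : forall j, j != i0 -> j != i1 -> z j 0 = 0.
  move=> k h0 h1; apply/eqP; move/existsPn: hex => /(_ k); rewrite h0 h1 /=.
  by move/negPn.
apply: caseB => // j hj.
case: (eqVneq j i1) => [->|hj1]; last exact: hrest.
have : z i1 0 * z i1 0 = 0.
  by rewrite -hq sum_split1 big1 ?addr0 // => k /andP [h0 h1]; rewrite hrest // mul0r.
by move/eqP; rewrite mulf_eq0 orbb => /eqP.
Qed.

End P7.


Unset Implicit Arguments.
Theorem mainTheorem3 (R : realType) (d : nat) (hd : (1 <= d)%N) :
  forall z : vec R d, dScut z <-> dScut_rhs z.
Proof.
move=> z; split.
- exact: (@sub_dir R d hd z).
- exact: (@sup_dir R d hd z).
Qed.
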